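(* Let $f:\mathbb{T}^2\to\mathbb{T}^2$ be an area preserving non-invertible endomorphism and suppose $U\subset\mathbb{T}^2$ is a regular open set with $f^{-1}(U)=U$. If $U_0$ is a connected component of $U$, then there exists $n\ge1$ such that $f^{-n}(U_0)=U_0$.
   Context: An endomorphism is a local homeomorphism (covering map) $f:\mathbb{T}^2\to\mathbb{T}^2$, $\mathbb{T}^2=\mathbb{R}^2/\mathbb{Z}^2$ with Haar measure $\lambda$; area preserving means $\lambda(f^{-1}(B))=\lambda(B)$ for all Borel $B$; non-invertible means degree at least two. An open set is regular if it equals the interior of its closure. *)

(* Defs.v *)
From HB Require Import structures.
From mathcomp Require Import all_boot all_order all_algebra generic_quotient.
From mathcomp Require Import all_classical all_reals all_analysis.
Set Implicit Arguments. Unset Strict Implicit. Unset Printing Implicit Defensive.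
Import Order.TTheory GRing.Theory Num.Theory.
Import numFieldNormedType.Exports.
Local Open Scope classical_set_scope.
Local Open Scope ring_scope.
Local Open Scope quotient_scope.

Section Torus.
Variable R : realType.

Definition torus_rel (x y : R * R) : bool :=
  ((x.1 - y.1) \is a Num.int) && ((x.2 - y.2) \is a Num.int).

Lemma torus_rel_refl : reflexive torus_rel.
Proof. by move=> x; rewrite /torus_rel !subrr rpred0. Qed.

Lemma torus_rel_sym : symmetric torus_rel.
Proof.
move=> x y; rewrite /torus_rel -(opprB x.1) -(opprB x.2).
by rewrite !rpredN.
Qed.

Lemma torus_rel_trans : transitive torus_rel.
Proof.
move=> y x z /andP[h1 h2] /andP[h3 h4]; apply/andP; split.
- by have := rpredD h1 h3; rewrite addrA subrK.
- by have := rpredD h2 h4; rewrite addrA subrK.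
Qed.

Canonical torus_equiv := EquivRel torus_rel torus_rel_refl torus_rel_sym
  torus_rel_trans.

End Torus.

Definition torus_quot (R : realType) := {eq_quot (torus_equiv R)}.
Notation torus R := (quotient_topology (torus_quot R)).

Section TorusMeasure.
Variable R : realType.

Definition torus_proj (p : R * R) : torus R := \pi_(torus R) p.

Definition torus_borel (B : set (torus R)) : Prop := <<s (@open (torus R)) >> B.

(* Haar (area) measure of T^2: Lebesgue measure of the trace of the
   lift of B on the fundamental domain [0,1) x [0,1). *)
Definition haar (B : set (torus R)) : \bar R :=
  ((@lebesgue_measure R) \x (@lebesgue_measure R))%E
    ((torus_proj @^-1` B) `&` (`[0, 1[ `*` `[0, 1[)).

End TorusMeasure.

Definition local_homeomorphism (T : topologicalType) (f : T -> T) : Prop :=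
  continuous f /\
  forall x : T, exists V : set T,
    [/\ open V, V x, {in V &, injective f} &
        forall W : set T, open W -> W `<=` V -> open (f @` W)].

Definition regular_open (T : topologicalType) (U : set T) : Prop :=
  open U /\ U = interior (closure U).

Definition area_preserving (R : realType) (f : torus R -> torus R) : Prop :=
  forall B : set (torus R), torus_borel B -> haar (f @^-1` B) = haar B.

(* Main.v *)
Require Import Defs.
From HB Require Import structures.
From mathcomp Require Import all_boot all_order all_algebra generic_quotient.
From mathcomp Require Import all_classical all_reals all_analysis.
From mathcomp Require Import ring lra.
Import numFieldNormedType.Exports.
Local Open Scope classical_set_scope.
Set Implicit Arguments. Unset Strict Implicit. Unset Printing Implicit Defensive.
Import Order.TTheory GRing.Theory Num.Theory.

Section Generic.
Local Open Scope ring_scope.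
Variables (R : realType) (T : topologicalType) (f : T -> T) (U : set T)
  (h : set T -> R).
Hypotheses (fc : continuous f) (fU : f @^-1` U = U)
  (compo : forall z, open (connected_component U z))
  (h_add : forall A B, open A -> open B -> A `&` B = set0 -> h (A `|` B) = h A + h B)
  (h_pos : forall A, open A -> A !=set0 -> 0 < h A)
  (h_le1 : forall A, open A -> h A <= 1)
  (h_f : forall A, open A -> h (f @^-1` A) = h A).

Local Notation comp := (connected_component U).

Definition sat (S : set T) := forall z, S z -> U z /\ comp z `<=` S.

Lemma sat_open S : sat S -> open S.
Proof.
move=> sS; rewrite (_ : S = \bigcup_(z in S) comp z).
  by apply: bigcup_open => z _; exact: compo.
apply/seteqP; split => z.
  by move=> Sz; exists z => //; apply: connected_component_refl; case: (sS z Sz).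
by move=> [w Sw cz]; case: (sS w Sw) => _; apply.
Qed.

Lemma comp_same a b : comp a b -> comp b = comp a.
Proof. by move=> ab; rewrite (same_connected_component ab). Qed.

Lemma sat_comp w : sat (comp w).
Proof.
move=> z wz; split; first exact: connected_component_sub wz.
by rewrite (comp_same wz).
Qed.

Lemma Uf z : U z -> U (f z).
Proof. by move=> Uz; have : (f @^-1` U) z by rewrite fU. Qed.

Lemma comp_f z : U z -> f @` comp z `<=` comp (f z).
Proof.
move=> Uz; apply: connected_component_max.
- by exists z => //; exact: connected_component_refl.
- by move=> _ [y /connected_component_sub Uy <-]; exact: Uf.
- apply: connected_continuous_connected; first exact: component_connected.
  exact: continuous_subspaceT.
Qed.

Lemma sat_pre S : sat S -> sat (f @^-1` S).
Proof.
move=> sS z Sfz; have [Ufz cS] := sS _ Sfz.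
have Uz : U z by rewrite -fU.
split => // y zy; apply: cS; apply: comp_f => //; exists y => //.
Qed.

Lemma comp_disj a b c : comp a c -> comp b c -> comp a = comp b.
Proof. by move=> ac bc; rewrite -(comp_same ac) -(comp_same bc). Qed.

Lemma sat_D S S' : sat S -> sat S' -> sat (S `\` S').
Proof.
move=> sS sS' z [Sz nS'z]; have [Uz cS] := sS z Sz; split => // y zy; split.
  exact: cS.
move=> S'y; have [_ cS'] := sS' y S'y; apply: nS'z; apply: cS'.
by rewrite (comp_same zy); exact: connected_component_refl.
Qed.

Lemma h0 : h set0 = 0.
Proof.
have := h_add open0 open0 (setI0 set0); rewrite setU0 => /eqP.
by rewrite -subr_eq0 opprD addrA subrr add0r oppr_eq0 => /eqP.
Qed.

Lemma h_ge0 A : open A -> 0 <= h A.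
Proof.
move=> oA; have [->|/set0P nA] := eqVneq A set0; first by rewrite h0.
exact/ltW/h_pos.
Qed.


Variable x : T.
Hypothesis Ux : U x.

Let W k := comp (iter k f x).

Lemma U_iter k : U (iter k f x).
Proof. by elim: k => //= k IH; exact: Uf. Qed.

Lemma W_in k : W k (iter k f x).
Proof. exact/connected_component_refl/U_iter. Qed.

Lemma W_sub k : W k `<=` f @^-1` W k.+1.
Proof.
have [_] := @sat_pre _ (@sat_comp (iter k.+1 f x)) (iter k f x) (W_in k.+1).
by apply.
Qed.

Let D k := f @^-1` W k.+1 `\` W k.

Lemma D_open k : open (D k).
Proof. apply: sat_open; apply: sat_D; [apply: sat_pre; exact: sat_comp|exact: sat_comp]. Qed.

Lemma W_open k : open (W k). Proof. exact: compo. Qed.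

Lemma hW_step k : h (W k.+1) = h (W k) + h (D k).
Proof.
rewrite -h_f; last exact: W_open.
rewrite -h_add; [|exact: W_open|exact: D_open|].
- by congr h; rewrite /D setDUK //; exact: W_sub.
- by rewrite /D setDE setICA setICr setI0.
Qed.

Lemma hW_mono i j : (i <= j)%N -> h (W i) <= h (W j).
Proof.
elim: j => [|j IH]; first by rewrite leqn0 => /eqP ->.
rewrite leq_eqVlt => /orP[/eqP -> //|/IH hij].
by rewrite hW_step; apply: (le_trans hij); rewrite lerDl; apply: h_ge0; exact: D_open.
Qed.

Lemma hW_eq k : h (W k.+1) = h (W k) -> f @^-1` W k.+1 = W k.
Proof.
move=> e; have hD : h (D k) = 0.
  by move: e; rewrite hW_step => /eqP; rewrite -subr_eq0 addrC addKr => /eqP.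
have D0 : D k = set0.
  apply/eqP/negPn/negP => /set0P nD.
  by have := h_pos (D_open k) nD; rewrite hD ltxx.
apply/seteqP; split; last exact: W_sub.
move=> y fy; apply: contrapT => nW.
have : D k y by split.
by rewrite D0.
Qed.


Lemma W_disj i j : W i `&` W j !=set0 -> W i = W j.
Proof. by move=> [y [Wiy Wjy]]; exact: comp_disj Wiy Wjy. Qed.

Fixpoint V n := if n is m.+1 then V m `|` W m else set0.

Lemma V_open n : open (V n).
Proof. by elim: n => [|n IH] /=; [exact: open0|apply: openU => //; exact: W_open]. Qed.

Lemma V_sub n y : V n y -> exists2 k, (k < n)%N & W k y.
Proof.
elim: n => [//|n IH] /= [/IH [k kn Wk]|Wn]; first by exists k => //; exact: ltnW.
by exists n.
Qed.

Lemma repeatW : exists i j, (i < j)%N /\ W i = W j.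
Proof.
apply: contrapT => nr.
have dis i j : (i < j)%N -> W i `&` W j = set0.
  move=> ij; apply/eqP/negPn/negP => /set0P ne; apply: nr; exists i, j.
  by split => //; exact: W_disj.
have c0 : 0 < h (W 0) by apply: h_pos; [exact: W_open|exists x; exact: W_in].
have hV n : n%:R * h (W 0) <= h (V n).
  elim: n => [|n IH] /=; first by rewrite mul0r h0.
  rewrite h_add; [|exact: V_open|exact: W_open|].
  - rewrite -addn1 natrD mulrDl mul1r; apply: lerD => //.
    exact: hW_mono.
  - apply/eqP/negPn/negP => /set0P [y [/V_sub [k kn Wky] Wny]].
    by have := dis _ _ kn; move/seteqP => [+ _] => /(_ y (conj Wky Wny)).
set n := (Num.truncn (h (W 0))^-1).+1.
have := le_trans (hV n) (h_le1 (V_open n)).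
have : (h (W 0))^-1 < n%:R by exact: Num.Theory.truncnS_gt.
rewrite -(ltr_pM2r c0) mulVf ?gt_eqF // => lt1 le1.
by have := lt_le_trans lt1 le1; rewrite ltxx.
Qed.

Lemma back i j : (i < j)%N -> W i.+1 = W j.+1 -> W i = W j.
Proof.
move=> ij e.
have hj : h (W j.+1) = h (W j).
  apply/eqP; rewrite eq_le; apply/andP; split; last exact: hW_mono.
  rewrite -e; exact: hW_mono.
have := hW_eq hj => pre.
have : W j (iter i f x) by rewrite -pre -e; exact: W_sub (W_in i).
by move=> /comp_same.
Qed.

Lemma descend i j : (i < j)%N -> W i = W j -> exists2 p, (0 < p)%N & W 0 = W p.
Proof.
elim: i j => [|i IH] j ij e; first by exists j.
case: j ij e => [//|j] ij e.
exact: (IH j ij (@back i j ij e)).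
Qed.

Lemma periodic : exists2 n, (1 <= n)%N & iter n f @^-1` comp x = comp x.
Proof.
have [i [j [ij e]]] := repeatW.
have [p p0 e0] := descend ij e.
have heq k : (k < p)%N -> h (W k.+1) = h (W k).
  move=> kp; apply/eqP; rewrite eq_le; apply/andP; split; last exact: hW_mono.
  apply: (le_trans (hW_mono kp)); rewrite -e0; exact: hW_mono.
have it k : (k <= p)%N -> iter k f @^-1` W k = W 0.
  elim: k => [//|k IH] kp.
  change (iter k f @^-1` (f @^-1` W k.+1) = W 0).
  by rewrite hW_eq ?heq // IH // ltnW.
exists p => //.
have := it p (leqnn p); rewrite -e0.
by [].
Qed.

End Generic.

Section M.
Local Open Scope ring_scope.
Variable R : realType.

Definition box (q : (rat * rat) * (rat * rat)) : set (R * R) :=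
  `]ratr q.1.1, ratr q.1.2[ `*` `]ratr q.2.1, ratr q.2.2[.

Lemma ball_box (c : R) e : 0 < e -> exists a b : rat,
  ratr a < c < ratr b /\ `]ratr a, ratr b[ `<=` ball c e.
Proof.
move=> e0.
have h1 : c - e < c by rewrite ltrBlDr ltrDl.
have h2 : c < c + e by rewrite ltrDl.
have [a] := rat_in_itvoo h1; rewrite in_itv /= => /andP[a1 a2].
have [b] := rat_in_itvoo h2; rewrite in_itv /= => /andP[b1 b2].
exists a, b; rewrite a2 b1; split => // y /=; rewrite ball_itv /= !in_itv /=.
move=> /andP[ay yb]; apply/andP; split.
  exact: lt_trans a1 ay.
exact: lt_trans yb b2.
Qed.

Lemma open_meas2 (B : set (R * R)) : open B -> measurable B.
Proof.
move=> oB.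
have -> : B = \bigcup_(q in [set q | box q `<=` B]) box q.
  apply/seteqP; split; last by move=> y [q qB /qB].
  move=> p Bp.
  have /nbhs_ballP [e e0 epB] : nbhs p B by exact: open_nbhs_nbhs.
  have [a1 [b1 [/andP[a1p b1p] s1]]] := ball_box p.1 e0.
  have [a2 [b2 [/andP[a2p b2p] s2]]] := ball_box p.2 e0.
  exists ((a1, b1), (a2, b2)).
    move=> y [/= y1 y2]; apply: epB; split; [exact: s1|exact: s2].
  by split => /=; rewrite in_itv /= ?a1p ?b1p ?a2p ?b2p.
rewrite bigcup_mkcond; apply: countable_bigcupT_measurable => // q.
case: ifP => _ //; apply: measurableX; exact: measurable_itv.
Qed.
End M.

Section Top.
Local Open Scope ring_scope.
Local Open Scope quotient_scope.
Variable R : realType.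
Local Notation pr := (@torus_proj R).

Lemma proj_eq (p q : R * R) : pr p = pr q <-> torus_rel p q.
Proof.
rewrite /torus_proj; split.
  move=> H; have H' : (\pi_(torus_quot R) p = \pi_(torus_quot R) q) := H.
  by move/eqmodP: H'.
move=> H; have H' : (\pi_(torus_quot R) p = \pi_(torus_quot R) q).
  by apply/eqmodP.
exact: H'.
Qed.

Lemma ballRE (c y : R) e : ball c e y = (`|c - y| < e).
Proof. by rewrite /ball. Qed.

Lemma pi_image_open (W : set (R * R)) : open W -> open (pr @` W : set (torus R)).
Proof.
move=> oW; change (open (pr @^-1` (pr @` W))).
rewrite openE => q [w Ww /proj_eq /andP [r1 r2]].
have /nbhs_ballP [e e0 ewW] : nbhs w W by exact: open_nbhs_nbhs.
apply/nbhs_ballP; exists e => // q' [/= b1 b2].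
exists (q'.1 - q.1 + w.1, q'.2 - q.2 + w.2).
  apply: ewW; split => /=; rewrite ballRE.
  - by have -> : w.1 - (q'.1 - q.1 + w.1) = q.1 - q'.1 by ring.
  - by have -> : w.2 - (q'.2 - q.2 + w.2) = q.2 - q'.2 by ring.
apply/proj_eq/andP; split => /=.
  by have -> : q'.1 - q.1 + w.1 - q'.1 = w.1 - q.1 by ring.
by have -> : q'.2 - q.2 + w.2 - q'.2 = w.2 - q.2 by ring.
Qed.


Lemma ballR_connected (c : R) e : connected (ball c e).
Proof. by apply/connected_intervalP; rewrite ball_itv; exact: interval_is_interval. Qed.

Lemma pairl_cont (a : R) : continuous (fun y : R => (a, y) : R * R).
Proof.
move=> y; apply: (@cvg_pair _ _ _ _ (nbhs a) (nbhs y)); [exact: cvg_cst|exact: cvg_id].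
Qed.

Lemma pairr_cont (a : R) : continuous (fun y : R => (y, a) : R * R).
Proof.
move=> y; apply: (@cvg_pair _ _ _ _ (nbhs y) (nbhs a)); [exact: cvg_id|exact: cvg_cst].
Qed.

Lemma ball2_connected (p : R * R) e : connected (ball p e).
Proof.
have [e0|e0] := ltP 0 e; last first.
  have -> : ball p e = set0.
    apply/seteqP; split => // y [b1 _].
    have := le_lt_trans (normr_ge0 _) (b1 : `|p.1 - y.1| < e).
    by rewrite ltNge e0.
  exact: connected0.
set I := ball p.1 e; set J := ball p.2 e.
have -> : ball p e = \bigcup_(a in I) (([set a] `*` J) `|` (I `*` [set p.2])).
  apply/seteqP; split.
    by move=> y [y1 y2]; exists y.1 => //; left; split.
  move=> [u v] [a Ia [[/= -> Jy]|[Iy /= ->]]]; split => //; exact: ballxx.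
apply: bigcup_connected.
  exists p => a Ia; right; split => //; exact: ballxx.
move=> a Ia; apply: connectedU.
- exists (a, p.2); split; split => //; exact: ballxx.
- have -> : [set a] `*` J = (fun y => (a, y)) @` J.
    apply/seteqP; split; first by move=> [u v] [/= -> Jv]; exists v.
    by move=> _ [v Jv <-].
  apply: connected_continuous_connected; first exact: ballR_connected.
  exact/continuous_subspaceT/pairl_cont.
- have -> : I `*` [set p.2] = (fun y => (y, p.2)) @` I.
    apply/seteqP; split; first by move=> [u v] [Iu /= ->]; exists u.
    by move=> _ [v Iv <-].
  apply: connected_continuous_connected; first exact: ballR_connected.
  exact/continuous_subspaceT/pairr_cont.
Qed.

Lemma proj_repr (y : torus R) : pr (repr y) = y.
Proof. exact: reprK. Qed.

Lemma local_conn (V : set (torus R)) y : open V -> V y ->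
  exists C : set (torus R), [/\ open C, connected C, C y & C `<=` V].
Proof.
move=> oV Vy.
have opV : open (pr @^-1` V) by [].
have /nbhs_ballP [e e0 eV] : nbhs (repr y) (pr @^-1` V).
  by apply: open_nbhs_nbhs; split => //=; rewrite proj_repr.
exists (pr @` ball (repr y) e); split.
- exact/pi_image_open/ball_open.
- apply: connected_continuous_connected; first exact: ball2_connected.
  exact/continuous_subspaceT/pi_continuous.
- by exists (repr y); [exact: ballxx|exact: proj_repr].
- by move=> _ [z /eV Vz <-].
Qed.

Lemma comp_open (U : set (torus R)) z : open U -> open (connected_component U z).
Proof.
move=> oU; rewrite openE => y czy.
have Uy := connected_component_sub czy.
have [C [oC cC Cy CU]] := local_conn oU Uy.
have : C `<=` connected_component U z.
  rewrite (same_connected_component czy).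
  exact: connected_component_max.
move=> Cz; apply: filterS Cz _; exact: open_nbhs_nbhs.
Qed.

End Top.

Section Meas.
Local Open Scope ring_scope.
Variable R : realType.
Local Notation pr := (@torus_proj R).
Local Notation mu := ((@lebesgue_measure R) \x (@lebesgue_measure R))%E.
Local Notation S := (`[(0:R), 1[ `*` `[(0:R), 1[).

Lemma S_meas : measurable S.
Proof. apply: measurableX; exact: measurable_itv. Qed.

Lemma pre_meas (A : set (torus R)) : open A -> measurable (pr @^-1` A `&` S).
Proof. move=> oA; apply: measurableI; [exact: open_meas2|exact: S_meas]. Qed.

Lemma haarE A : haar A = mu (pr @^-1` A `&` S).
Proof. by []. Qed.

Lemma haar_U (A B : set (torus R)) : open A -> open B -> A `&` B = set0 ->
  haar (A `|` B) = (haar A + haar B)%E.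
Proof.
move=> oA oB AB; rewrite !haarE preimage_setU setIUl measureU //;
  try exact: pre_meas.
apply/seteqP; split => // y [[Ay _] [By _]].
by have : (A `&` B) (pr y) by []; rewrite AB.
Qed.

Lemma mu_S : mu S = 1%E.
Proof.
rewrite product_measure1E; try exact: measurable_itv.
have L := @lebesgue_measure_itv R `[(0:R), 1[%R; rewrite /= lte01 oppr0 adde0 in L.
by rewrite [X in (X * _)%E]L [X in (_ * X)%E]L mule1.
Qed.

Lemma haar_le1 (A : set (torus R)) : open A -> (haar A <= 1)%E.
Proof.
move=> oA; rewrite haarE -mu_S; apply: le_measure; rewrite ?inE.
- exact: pre_meas.
- exact: S_meas.
- by move=> y [].
Qed.

Lemma haar_ge0 (A : set (torus R)) : (0 <= haar A)%E.
Proof. exact: measure_ge0. Qed.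


Lemma small3 (a b c : R) : 0 < a -> 0 < b -> 0 < c ->
  exists d : R, [/\ 0 < d, 4 * d <= a, 4 * d <= b & 4 * d <= c].
Proof.
move=> a0 b0 c0; set m := Order.min a (Order.min b c).
have m0 : 0 < m by rewrite !lt_min a0 b0 c0.
have ma : m <= a by rewrite ge_min lexx.
have mb : m <= b by rewrite ge_min ge_min lexx orbT.
have mc : m <= c by rewrite ge_min ge_min lexx !orbT.
exists (m / 4); split; first by rewrite divr_gt0.
- by rewrite mulrC divfK ?pnatr_eq0.
- by rewrite mulrC divfK ?pnatr_eq0.
- by rewrite mulrC divfK ?pnatr_eq0.
Qed.

Lemma coord_ball (a e d y : R) : 0 <= a -> 0 < d -> 4 * d <= e -> 4 * d <= 1 - a ->
  ball (a + d) d y -> ball a e y /\ `[(0:R), 1[%classic y.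
Proof.
move=> a0 d0 de da; rewrite !ballRE ltr_norml => /andP[h1 h2].
split; first by rewrite ltr_norml; apply/andP; split; lra.
by rewrite /= in_itv /=; apply/andP; split; lra.
Qed.

Lemma haar_pos (A : set (torus R)) : open A -> A !=set0 -> (0 < haar A)%E.
Proof.
move=> oA [y Ay].
set p := repr y.
set p' := (p.1 - (Num.floor p.1)%:~R, p.2 - (Num.floor p.2)%:~R).
have pp' : pr p' = y.
  rewrite -(proj_repr y) -/p; apply/proj_eq/andP; split => /=.
    by rewrite addrAC subrr add0r rpredN intr_int.
  by rewrite addrAC subrr add0r rpredN intr_int.
have p1a : 0 <= p'.1 by rewrite /= subr_ge0 Num.Theory.floor_le.
have p2a : 0 <= p'.2 by rewrite /= subr_ge0 Num.Theory.floor_le.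
have p1b : p'.1 < 1.
  by rewrite /= ltrBlDl -[1]/(1%:~R) -intrD Num.Theory.floorD1_gt.
have p2b : p'.2 < 1.
  by rewrite /= ltrBlDl -[1]/(1%:~R) -intrD Num.Theory.floorD1_gt.
have /nbhs_ballP [e e0 eA] : nbhs p' (pr @^-1` A).
  by apply: open_nbhs_nbhs; split => //=; rewrite pp'.
have g1 : 0 < 1 - p'.1 by rewrite subr_gt0.
have g2 : 0 < 1 - p'.2 by rewrite subr_gt0.
have [d [d0 de d1 d2]] := small3 e0 g1 g2.
set Q := ball (p'.1 + d) d `*` ball (p'.2 + d) d.
have QA : Q `<=` pr @^-1` A `&` S.
  move=> q [/= q1 q2].
  have [b1 s1] := coord_ball p1a d0 de d1 q1.
  have [b2 s2] := coord_ball p2a d0 de d2 q2.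
  by split; [apply: eA; split|split].
have mQ : measurable Q.
  by apply: measurableX; rewrite ball_itv; exact: measurable_itv.
apply: (@lt_le_trans _ _ (mu Q)); last first.
  by rewrite haarE; apply: le_measure; rewrite ?inE //; exact: pre_meas.
rewrite product_measure1E; try by rewrite ball_itv; exact: measurable_itv.
have L1 := lebesgue_measure_ball (p'.1 + d) (ltW d0).
have L2 := lebesgue_measure_ball (p'.2 + d) (ltW d0).
rewrite [X in (X * _)%E]L1 [X in (_ * X)%E]L2.
by rewrite -EFinM lte_fin mulr_gt0 // pmulrn_rgt0.
Qed.

End Meas.

Theorem lemma5 (R : realType) (f : torus R -> torus R)
    (U U0 : set (torus R)) :
  local_homeomorphism f ->
  area_preserving f ->
  ~ injective f ->
  regular_open U ->
  f @^-1` U = U ->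
  (exists2 x, U x & U0 = connected_component U x) ->
  exists2 n : nat, (1 <= n)%N & (iter n f) @^-1` U0 = U0.
Proof.
move=> [fc _] ap _ [oU _] fU [x Ux ->].
have fin A : open A -> haar A \is a fin_num.
  move=> oA; rewrite ge0_fin_numE; last exact: haar_ge0.
  exact: le_lt_trans (haar_le1 oA) (ltry _).
apply: (@periodic R _ f U (fun A => fine (haar A))) => //.
- move=> z; exact: comp_open.
- move=> A B oA oB AB; rewrite haar_U // fineD //; exact: fin.
- move=> A oA nA; apply: fine_gt0; rewrite haar_pos //=.
  exact: le_lt_trans (haar_le1 oA) (ltry _).
- move=> A oA; rewrite -[1%R]/(fine 1%E); apply: fine_le; rewrite ?inE.
  + exact: fin.
  + by [].
  + exact: haar_le1.
- move=> A oA; rewrite ap //; exact: sub_sigma_algebra.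
Qed.
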